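(* The Skolem problem is reducible to the Point-To-Point Reachability problem (P2P) for polynomial recursive sequences: there is an algorithm that, given an instance of the Skolem problem (a linear recurrence sequence $u$), computes an instance of P2P (a system of polynomial recursive sequences together with a target vector) such that $u$ has a zero if and only if the system reaches the target vector. Consequently, a decision procedure for P2P would yield a decision procedure for the Skolem problem.
   Context: The Skolem problem: given $k\ge1$, coefficients $a_0,\dots,a_{k-1}\in\mathbb{Q}$ with $a_0\neq0$ and initial values $u(0),\dots,u(k-1)\in\mathbb{Q}$, defining the linear recurrence sequence $u:\mathbb{N}_0\to\mathbb{Q}$ by $u(n+k)=\sum_{i=0}^{k-1}a_iu(n+i)$, decide whether there exists $m\in\mathbb{N}_0$ with $u(m)=0$. The P2P problem: given $k\ge1$, polynomials $p_1,\dots,p_k\in\mathbb{Q}[y_1,\dots,y_k]$, initial values $u_1(0),\dots,u_k(0)\in\mathbb{Q}$, defining sequences by $u_i(n+1)=p_i(u_1(n),\dots,u_k(n))$ for all $n\ge0$, and a target vector $(t_1,\dots,t_k)\in\mathbb{Q}^k$, decide whether there exists $m\in\mathbb{N}_0$ with $u_i(m)=t_i$ for all $1\le i\le k$. *)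

(* Defs.v *)
From HB Require Import structures.
From mathcomp Require Import all_boot all_order all_algebra.
From mathcomp Require Import mpoly.
Set Implicit Arguments. Unset Strict Implicit. Unset Printing Implicit Defensive.
Import Order.TTheory GRing.Theory Num.Theory.
Local Open Scope ring_scope.

Definition p2p_seq (k : nat) (p : 'I_k -> {mpoly rat[k]}) (x0 : 'I_k -> rat)
  : nat -> 'I_k -> rat :=
  fun n => iter n (fun v i => (p i).@[v]) x0.

Definition p2p_reaches (k : nat) (p : 'I_k -> {mpoly rat[k]}) (x0 t : 'I_k -> rat)
  : Prop :=
  exists m : nat, forall i : 'I_k, p2p_seq p x0 m i = t i.

(* Companion map of u(n+k+1) = sum_i a_i u(n+i), as polynomials in y_0..y_k:
   y_i |-> y_{i+1} for i < k, and y_k |-> sum_j a_j y_j. *)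
Definition companion_poly (k : nat) (a : 'I_k.+1 -> rat) (i : 'I_k.+1)
  : {mpoly rat[k.+1]} :=
  if (i < k)%N then 'X_(inord i.+1) else \sum_(j < k.+1) a j *: 'X_j.

Definition skolem_p2p_polys (k : nat) (a : 'I_k.+1 -> rat) (i : 'I_k.+1)
  : {mpoly rat[k.+1]} :=
  'X_ord0 * companion_poly a i.

Definition skolem_p2p_init (k : nat) (u : nat -> rat) : 'I_k.+1 -> rat :=
  fun i => u (val i).
Definition skolem_p2p_target (k : nat) : 'I_k.+1 -> rat := fun _ => 0.

(* Main.v *)
Require Import Defs.
From HB Require Import structures.
From mathcomp Require Import all_boot all_order all_algebra.
From mathcomp Require Import mpoly.
From mathcomp Require Import ring.
Import Order.TTheory GRing.Theory Num.Theory.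
Local Open Scope ring_scope.

Fixpoint Pw (u : nat -> rat) (n : nat) : rat :=
  match n with 0 => 1 | n'.+1 => Pw u n' ^+ 2 * u n' end.

Lemma Pw0 (u : nat -> rat) n : Pw u n = 0 <-> exists2 j, (j < n)%N & u j = 0.
Proof.
elim: n => [|n IH] /=.
  by split=> [/eqP|[]]; rewrite ?oner_eq0.
split.
  move/eqP; rewrite mulf_eq0 expf_eq0 /= => /orP[/eqP/IH[j jn uj]|/eqP un].
    by exists j => //; apply: ltnW.
  by exists n.
move=> [j]; rewrite ltnS leq_eqVlt => /orP[/eqP->|jn] uj; first by rewrite uj mulr0.
by rewrite (proj2 IH (ex_intro2 _ _ j jn uj)) expr0n mul0r.
Qed.

Lemma seqE (k : nat) (a : 'I_k.+1 -> rat) (u : nat -> rat)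
    (hu : forall n : nat, u (n + k.+1)%N = \sum_(i < k.+1) a i * u (n + i)%N) n i :
  p2p_seq (skolem_p2p_polys a) (skolem_p2p_init u) n i = Pw u n * u (n + i)%N.
Proof.
elim: n i => [|n IH] i; first by rewrite /p2p_seq /= mul1r.
rewrite /p2p_seq iterS -/(p2p_seq _ _ n) /skolem_p2p_polys mevalM mevalXU IH addn0.
rewrite /companion_poly; case: ifP => ik.
  rewrite mevalXU IH inordK ?ltnS // /=.
  by rewrite addnS -addSn; ring.
rewrite raddf_sum /=.
under eq_bigr => j _ do rewrite mevalZ mevalXU IH.
have -> : (n.+1 + i = n + k.+1)%N.
  by have := ltn_ord i; rewrite ltnS leq_eqVlt ik orbF => /eqP ->; rewrite addSnnS.
rewrite hu /= mulr_sumr mulr_sumr; apply: eq_bigr => j _; ring.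
Qed.

Theorem theorem3p3 (k : nat) (a : 'I_k.+1 -> rat) (ha0 : a ord0 != 0)
    (u : nat -> rat)
    (hu : forall n : nat, u (n + k.+1)%N = \sum_(i < k.+1) a i * u (n + i)%N) :
  (exists m : nat, u m = 0) <->
  p2p_reaches (skolem_p2p_polys a) (skolem_p2p_init u) (@skolem_p2p_target k).
Proof.
split.
  move=> [m um]; exists m.+1 => i; rewrite (@seqE _ _ _ hu) /skolem_p2p_target.
  by rewrite (proj2 (Pw0 u m.+1) (ex_intro2 _ _ m (ltnSn m) um)) mul0r.
move=> [m hm]; have := hm ord0; rewrite (@seqE _ _ _ hu) /skolem_p2p_target addn0.
move/eqP; rewrite mulf_eq0 => /orP[/eqP/Pw0[j _ uj]|/eqP um]; by [exists j | exists m].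
Qed.
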